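(* Let $\mathcal{G}=(\mathcal{V},\mathcal{E})$ be a DAG with treatment $A$ and outcome $Y$ as in the context, and let $\mathcal{G}'=\mathcal{G}\setminus(A\to Y)$. Let $P\subseteq\mathcal{P}$ be a set of precision variables, $Z\subseteq\mathcal{V}\setminus\{A,Y\}$, and $U\subseteq\mathcal{W}$ a set of extended confounding variables such that $Z\cup P\cup U$ is a $(Z\cup P)$-irreducible adjustment set for estimating $\tau$. Then in $\mathcal{G}'$: (i) $A\perp_{\mathcal{G}'}Y\mid Z\cup P\cup U$; (ii) $A\perp_{\mathcal{G}'}Y\mid Z\cup U$; hence $Z\cup P\cup U$ and $Z\cup U$ are valid adjustment sets. In $\mathcal{G}$: (a) $P\perp_{\mathcal{G}}A\mid Z$; (b) $P\perp_{\mathcal{G}}U\mid A\cup Z$. Moreover, if $S$ is a suboptimal precision variable and $P^*$ is a precision variable such that $S\perp_{\mathcal{G}'}Y\mid P^*\cup Z$ for all $Z\subseteq\mathcal{V}\setminus\{A,Y\}$, then (c) $S\perp_{\mathcal{G}}Y\mid Z\cup P^*$.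
   Context: $\mathcal{G}=(\mathcal{V},\mathcal{E})$ is a DAG containing treatment $A$ and outcome $Y$ with an edge $A\to Y$; variables follow a linear Gaussian SEM Markov and faithful to $\mathcal{G}$; no variable of $\mathcal{V}\setminus\{A,Y\}$ is a descendant of $A$. $\perp_{\mathcal{H}}$ denotes d-separation in graph $\mathcal{H}$. $\tau=\frac{\partial}{\partial a}E\{Y\mid do(A=a)\}$. A set $Z\subseteq\mathcal{V}\setminus\{A,Y\}$ is a valid adjustment set if the OLS estimator of the $A$-coefficient when regressing $Y$ on $A$ and $Z$ is unbiased for $\tau$ for every distribution Markov to $\mathcal{G}$ (equivalently here, $A\perp_{\mathcal{G}'}Y\mid Z$). For $K\subseteq Z$, a valid set $Z$ is $K$-irreducible if no proper subset $Z'\subsetneq Z$ with $K\subseteq Z'$ is valid. Precision variables $\mathcal{P}$: $V\in\mathcal{V}\setminus\{A,Y\}$ d-separated from $A$ in $\mathcal{G}'$ given every $K\subseteq\mathcal{V}\setminus\{A,Y\}$, and d-connected to $Y$ in $\mathcal{G}'$ given some $L\subseteq\mathcal{V}\setminus\{A,Y\}$. Suboptimal precision variables: $P\in\mathcal{P}$ for which there is another $P^*\in\mathcal{P}$ with all paths from $P$ to $Y$ in $\mathcal{G}'$ blocked given $P^*\cup Z$ for any $Z\subseteq\mathcal{V}\setminus\{A,Y\}$. Extended confounding variables $\mathcal{W}$: $V\in\mathcal{V}\setminus\{A,Y\}$ d-connected in $\mathcal{G}'$ to $A$ given some $K\subseteq\mathcal{V}\setminus\{A,Y\}$ and to $Y$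 given some $L\subseteq\mathcal{V}\setminus\{A,Y\}$. *)

(* Defs.v *)
From mathcomp Require Import all_boot.
Set Implicit Arguments. Unset Strict Implicit. Unset Printing Implicit Defensive.

Section DSep.
Variable T : finType.

(* A directed graph is an edge relation E : rel T ; E u v means u -> v. *)
Definition dag (E : rel T) : Prop := forall x y, E x y -> ~~ connect E y x.

Definition remove_edge (E : rel T) (a b : T) : rel T :=
  fun x y => E x y && ~~ ((x == a) && (y == b)).

Definition adj (E : rel T) : rel T := fun u v => E u v || E v u.

Fixpoint active_from (E : rel T) (Z : {set T}) (a b : T) (s : seq T) : bool :=
  match s with
  | [::] => true
  | c :: s' =>
      (if E a b && E c b then [exists w in Z, connect E b w] else b \notin Z)
      && active_from E Z b c s'
  end.

Definition active (E : rel T) (Z : {set T}) (x : T) (s : seq T) : bool :=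
  match s with
  | [::] => true
  | b :: s' => active_from E Z x b s'
  end.

Definition dconnected (E : rel T) (Z : {set T}) (x y : T) : Prop :=
  exists s : seq T,
    [&& path (adj E) x s, uniq (x :: s), last x s == y & active E Z x s].

Definition dsep (E : rel T) (X Y Z : {set T}) : Prop :=
  forall x y, x \in X -> y \in Y -> ~ dconnected E Z x y.

Variables (A Y : T).

Definition others : {set T} := ~: [set A; Y].

Definition Gp (E : rel T) : rel T := remove_edge E A Y.

(* valid adjustment set (graphical characterisation given in the context:
   A _||_{G'} Y | Z) *)
Definition valid_adj (E : rel T) (Z : {set T}) : Prop :=
  Z \subset others /\ dsep (Gp E) [set A] [set Y] Z.

Definition irreducible (E : rel T) (K Z : {set T}) : Prop :=
  K \subset Z /\ valid_adj E Z /\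
  (forall Z' : {set T}, K \subset Z' -> Z' \proper Z -> ~ valid_adj E Z').

Definition precision (E : rel T) (v : T) : Prop :=
  v \in others /\
  (forall K : {set T}, K \subset others -> dsep (Gp E) [set v] [set A] K) /\
  (exists L : {set T}, L \subset others /\ dconnected (Gp E) L v Y).

Definition suboptimal (E : rel T) (v : T) : Prop :=
  precision E v /\
  exists Ps : T, Ps != v /\ precision E Ps /\
    (forall Z : {set T}, Z \subset others ->
       dsep (Gp E) [set v] [set Y] (Ps |: Z)).

Definition ext_confounder (E : rel T) (v : T) : Prop :=
  v \in others /\
  (exists K : {set T}, K \subset others /\ dconnected (Gp E) K v A) /\
  (exists L : {set T}, L \subset others /\ dconnected (Gp E) L v Y).

End DSep.

(* Main.v *)
Require Import Defs.
From mathcomp Require Import all_boot.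
Set Implicit Arguments. Unset Strict Implicit. Unset Printing Implicit Defensive.

Section Helpers.
Variable T : finType.

Fixpoint colliders (F : rel T) (a b : T) (s : seq T) : seq T :=
  match s with
  | [::] => [::]
  | c :: s' => (if F a b && F c b then [:: b] else [::]) ++ colliders F b c s'
  end.

Lemma colliders_sub F a b s x : x \in colliders F a b s -> x \in belast b s.
Proof.
elim: s a b => [|c s IH] a b //=.
rewrite mem_cat inE; case: ifP => _ /=; last by move/IH => ->; rewrite orbT.
by rewrite inE => /orP[->//|/IH ->]; rewrite orbT.
Qed.

Lemma active_colliders F (K : {set T}) a b s :
  uniq (b :: s) -> (forall x, x \in colliders F a b s -> x \in K) ->
  (forall x, x \in K -> x \in belast b s -> x \in colliders F a b s) ->
  active_from F K a b s.
Proof.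
elim: s a b => [|c s IH] a b //= /andP[bn /andP[cn us]] h1 h2.
apply/andP; split.
  case: ifP => hc.
    apply/existsP; exists b; rewrite connect0 andbT; apply: h1.
    by rewrite hc mem_cat inE eqxx.
  apply/negP => bK; have := h2 b bK; rewrite /= inE eqxx hc /= => /(_ isT).
  by move/colliders_sub/mem_belast; rewrite (negbTE bn).
apply: IH; first by rewrite /= cn.
  by move=> x hx; apply: h1; rewrite mem_cat hx orbT.
move=> x xK xb; have := h2 x xK; rewrite /= inE xb orbT => /(_ isT).
rewrite mem_cat; case/orP => //; case: ifP => _; rewrite ?inE // => /eqP xe.
by move: xb; rewrite xe => /mem_belast; rewrite (negbTE bn).
Qed.

Lemma active_mono F (K K' : {set T}) a b s :
  K \subset K' -> (forall x, x \in b :: s -> x \in K' -> x \in K) ->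
  active_from F K a b s -> active_from F K' a b s.
Proof.
move=> sKK'; elim: s a b => [|c s IH] a b //= h /andP[h1 h2].
apply/andP; split; last by apply: IH => // x hx; apply: h; rewrite inE hx orbT.
case: ifP h1 => _.
  by case/existsP => w /andP[wK cw]; apply/existsP; exists w; rewrite (subsetP sKK').
by move=> bK; apply/negP => /h; rewrite inE eqxx => /(_ isT); rewrite (negbTE bK).
Qed.

Variables (E : rel T) (A Y : T).
Hypotheses (dagE : dag E) (AY : A != Y) (EAY : E A Y)
  (desc : forall v, connect E A v -> v \in [set A; Y]).
Set Default Proof Using "All".

Lemma descY w : connect E Y w -> w = Y.
Proof.
move=> h; have := desc (connect_trans (connect1 EAY) h); rewrite !inE.
case/orP => /eqP // wA; subst w; by move: (dagE EAY); rewrite h.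
Qed.

Lemma noYchild x : E Y x -> False.
Proof.
move=> h; have xY := descY (connect1 h); subst x.
by move: (dagE h); rewrite connect0.
Qed.

Lemma Y_not_interior (F : rel T) (K : {set T}) a b s :
  (forall x y, F x y -> E x y) -> Y \notin K ->
  path (adj F) a (b :: s) -> active_from F K a b s -> Y \notin belast b s.
Proof.
move=> HF YK; elim: s a b => [|c s IH] a b //=.
case/andP=> ab /andP[bc pc] /andP[h1 h2]; rewrite inE negb_or.
rewrite (IH b c) ?andbT /= ?bc //.
apply/negP => /eqP bY; subst b.
have FaY : F a Y by case/orP: ab => // /HF /noYchild.
have FcY : F c Y by case/orP: bc => // /HF /noYchild.
move: h1; rewrite FaY FcY /= => /existsP[w /andP[wK cw]].
have : connect E Y w by apply: (connect_sub _ cw) => x y /HF; apply: connect1.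
by move/descY => wY; subst w; rewrite wK in YK.
Qed.

Lemma Gp_connect x w : connect E x w -> w != Y -> connect (Gp A Y E) x w.
Proof.
case/connectP => p; elim: p x => [|y p IH] x /=; first by move=> _ ->.
case/andP => exy py wl wY.
have IHy := IH y py wl wY.
case h: ((x == A) && (y == Y)).
  case/andP: h => _ /eqP yY; subst y.
  have : connect E Y w by apply/connectP; exists p.
  by move/descY => e; rewrite e eqxx in wY.
apply: connect_trans IHy; apply: connect1; by rewrite /Gp /remove_edge exy h.
Qed.

Lemma active_to_Gp (K : {set T}) a b s : Y \notin K -> Y \notin belast b s ->
  active_from E K a b s -> active_from (Gp A Y E) K a b s.
Proof.
move=> YK; elim: s a b => [|c s IH] a b //=.
rewrite inE negb_or eq_sym => /andP[bY hY] /andP[h1 h2].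
rewrite IH // andbT /Gp /remove_edge (negbTE bY) !andbF !andbT.
case: ifP h1 => // _ /existsP[w /andP[wK cw]]; apply/existsP; exists w.
rewrite wK Gp_connect //; by apply: contraNneq YK => <-.
Qed.

Lemma adj_Gp x y : adj E x y -> x != Y -> y != Y -> adj (Gp A Y E) x y.
Proof.
by rewrite /adj /Gp /remove_edge => h xY yY; rewrite (negbTE xY) (negbTE yY) !andbF !andbT.
Qed.

Lemma adj_Gp2 x : adj E x Y -> x != A -> adj (Gp A Y E) x Y.
Proof.
rewrite /adj /Gp /remove_edge => /orP[h|/noYchild //] xA.
by rewrite h (negbTE xA).
Qed.

Lemma path_Gp x s : path (adj E) x s -> Y \notin x :: s -> path (adj (Gp A Y E)) x s.
Proof.
elim: s x => [|y s IH] x //= /andP[h p]; rewrite !inE !negb_or => /and3P[xY yY sY].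
rewrite adj_Gp 1?eq_sym //=; apply: IH => //; by rewrite inE negb_or yY /= sY.
Qed.


Lemma notin_path b s : Y \notin belast b s -> last b s != Y -> Y \notin b :: s.
Proof. by rewrite lastI mem_rcons inE negb_or eq_sym => -> ->. Qed.

Lemma Y_notin_walk (F : rel T) (K : {set T}) x s :
  (forall x y, F x y -> E x y) -> Y \notin K ->
  path (adj F) x s -> active F K x s -> x != Y -> last x s != Y -> Y \notin x :: s.
Proof.
move=> HF YK; case: s => [|b s] ps act xY lY; first by rewrite inE eq_sym.
rewrite inE negb_or eq_sym xY /=; apply: notin_path => //.
exact: (Y_not_interior HF YK ps act).
Qed.

Lemma active_Gp_walk (K : {set T}) x s : Y \notin K -> path (adj E) x s ->
  active E K x s -> active (Gp A Y E) K x s.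
Proof.
move=> YK; case: s => [|b s] //= ps act; apply: active_to_Gp => //.
by apply: (Y_not_interior (F := E)) ps act.
Qed.

Lemma L1 p : precision A Y E p -> forall s, path (adj (Gp A Y E)) p s ->
  last p s = A -> Y \notin s -> False.
Proof.
move=> [pO [hsep _]] s ps.
case: (shortenP ps) => p' pp' up' sub ls Ys.
have Yp' : Y \notin p' by apply/negP => /sub; rewrite (negbTE Ys).
case: p' pp' up' sub ls Yp' => [|b s'] pp' up' _ ls Yp'.
  by move: pO; rewrite /= in ls; rewrite ls /others !inE eqxx.
pose K := [set x | x \in colliders (Gp A Y E) p b s'].
have ub : uniq (b :: s') by case/andP: up'.
have KO : K \subset others A Y.
  apply/subsetP => x; rewrite /K inE => /colliders_sub xb.
  rewrite /others !inE negb_or; apply/andP; split.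
    apply/negP => /eqP xA; subst x; move: ub; rewrite lastI rcons_uniq; rewrite /= in ls; rewrite ls.
    by rewrite xb.
  by apply/negP => /eqP xY; subst x; move: Yp'; rewrite (mem_belast xb).
apply: (hsep K KO p A (set11 p) (set11 A)); exists (b :: s').
rewrite pp' up' ls eqxx /=.
apply: active_colliders => // x; rewrite inE //.
Qed.

End Helpers.

Unset Implicit Arguments.
Set Strict Implicit.

Theorem lemmaB4 (T : finType) (E : rel T) (A Y : T) (P Z U : {set T}) :
  dag E -> A != Y -> E A Y ->
  (forall v, connect E A v -> v \in [set A; Y]) ->
  (forall p, p \in P -> precision A Y E p) ->
  Z \subset others A Y ->
  (forall u, u \in U -> ext_confounder A Y E u) ->
  irreducible A Y E (Z :|: P) (Z :|: P :|: U) ->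
  (dsep (Gp A Y E) [set A] [set Y] (Z :|: P :|: U) /\
   dsep (Gp A Y E) [set A] [set Y] (Z :|: U) /\
   valid_adj A Y E (Z :|: P :|: U) /\
   valid_adj A Y E (Z :|: U)) /\
  (dsep E P [set A] Z /\
   dsep E P U (A |: Z)) /\
  (forall S Ps : T,
     suboptimal A Y E S -> precision A Y E Ps ->
     (forall Z0 : {set T}, Z0 \subset others A Y ->
        dsep (Gp A Y E) [set S] [set Y] (Ps |: Z0)) ->
     dsep E [set S] [set Y] (Z :|: [set Ps])).
Proof.
move=> dagE AY EAY desc hP Zs hU [_ [[vsub vsep] _]].
have L1' := L1 dagE AY EAY desc.
have YZ : Y \notin Z.
  by apply/negP => /(subsetP Zs); rewrite /others !inE eqxx orbT.
have oY : forall v, v \in others A Y -> v != Y.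
  by move=> v; rewrite /others !inE negb_or => /andP[_].
have oA : forall v, v \in others A Y -> v != A.
  by move=> v; rewrite /others !inE negb_or => /andP[].
have HG : forall x y, Gp A Y E x y -> E x y by move=> x y /andP[].
have UO : U \subset others A Y by apply/subsetP => u /hU [].
have ii : dsep (Gp A Y E) [set A] [set Y] (Z :|: U).
  move=> a y; rewrite !inE => /eqP-> /eqP-> [s /and4P[ps us ls act]].
  case: (boolP (has (mem P) s)) => [/hasP[x xs xP]|/hasPn nP].
    have xY : x != Y by apply: oY; case: (hP x xP).
    case/splitPr: xs ps us ls => s1 s2 ps us ls.
    have Ys1 : Y \notin s1.
      apply/negP => Ys1; move: us => /= /andP[_]; rewrite cat_uniq => /and3P[_ /hasPn h _].
      move: ls; rewrite last_cat /= => /eqP ls.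
      by have := h _ (mem_last x s2); rewrite ls Ys1.
    move: ps; rewrite cat_path /= => /and3P[p1 e1 _].
    have pr : path (adj (Gp A Y E)) A (rcons s1 x) by rewrite rcons_path p1 e1.
    move: pr; rewrite -rev_path last_rcons belast_rcons rev_cons => pr.
    apply: (L1' x (hP x xP) (rcons (rev s1) A)).
    - by apply: sub_path pr => u v; rewrite /adj orbC.
    - by rewrite last_rcons.
    - by rewrite mem_rcons inE negb_or eq_sym AY mem_rev.
  apply: (vsep A Y (set11 A) (set11 Y)); exists s; rewrite ps us ls /=.
  case: s act nP {ps us ls} => [|b s] //= act nP.
  apply: (active_mono (K := Z :|: U)) => //.
    by rewrite setUAC subsetUl.
  move=> x xs; rewrite !inE -orbA => /or3P[->//|xP|->]; last by rewrite orbT.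
  by have := nP x xs; rewrite /= xP.
split.
  split; first by apply: vsep.
  split; first exact: ii.
  split; first by [].
  by split => //; rewrite subUset Zs UO.
split; first split.
- move=> p a pP; rewrite inE => /eqP-> [s /and4P[ps us /eqP ls act]].
  have pO : p \in others A Y by case: (hP p pP).
  have lY : last p s != Y by rewrite ls.
  have Yw := Y_notin_walk dagE AY EAY desc (F:=E) (fun x y h => h) YZ ps act (oY _ pO) lY.
  apply: (L1' p (hP p pP) s) => //.
    have := path_Gp dagE AY EAY desc ps Yw. done.
  by move: Yw; rewrite inE negb_or => /andP[].
- move=> p u pP uU [s /and4P[ps us /eqP ls act]].
  have pO : p \in others A Y by case: (hP p pP).
  case: (hU u uU) => uO [[K [KO [t /and4P[pt ut /eqP lt actt]]]] _].
  have YAZ : Y \notin A |: Z by rewrite !inE negb_or eq_sym AY YZ.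
  have lY : last p s != Y by rewrite ls; apply: oY.
  have Yw := Y_notin_walk dagE AY EAY desc (F:=E) (fun x y h => h) YAZ ps act (oY _ pO) lY.
  have ltY : last u t != Y by rewrite lt.
  have YK0 : Y \notin K by apply/negP => /(subsetP KO) /oY /eqP.
  have Yt := Y_notin_walk dagE AY EAY desc HG YK0 pt actt (oY _ uO) ltY.
  apply: (L1' p (hP p pP) (s ++ t)).
  + by rewrite cat_path (path_Gp dagE AY EAY desc ps Yw) ls pt.
  + by rewrite last_cat ls.
  + move: Yw Yt; rewrite !inE !negb_or => /andP[_ h1] /andP[_ h2]; by rewrite mem_cat negb_or h1 h2.
- move=> S Ps [Sprec _] hPs hsep x y; rewrite !inE => /eqP-> /eqP->.
  move=> [s /and4P[ps us /eqP ls act]].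
  have SO := Sprec.1.
  have YK : Y \notin Z :|: [set Ps].
    by rewrite !inE negb_or YZ eq_sym (oY _ hPs.1).
  have SY := oY _ SO.
  move: ps us ls act; case/lastP: s => [|s0 z] ps us ls act.
    by move: ls => /= ls; move: SY; rewrite ls eqxx.
  rewrite last_rcons in ls; subst z.
  have Ys0 : Y \notin s0 by move: us => /= /andP[_]; rewrite rcons_uniq => /andP[].
  move: (ps); rewrite rcons_path => /andP[p0 e0].
  have p0' : path (adj (Gp A Y E)) S s0.
    by apply: (path_Gp dagE AY EAY desc p0); rewrite inE negb_or eq_sym SY Ys0.
  case: (boolP (last S s0 == A)) => [/eqP lA|lA].
    exact: (L1' S Sprec s0 p0' lA Ys0).
  apply: (hsep Z Zs S Y (set11 S) (set11 Y)); exists (rcons s0 Y).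
  rewrite rcons_path p0' (adj_Gp2 dagE AY EAY desc e0 lA) us last_rcons eqxx /=.
  rewrite setUC; exact: (active_Gp_walk dagE AY EAY desc YK ps act).
Qed.
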